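(* The scheme $CD$ (described in the context) can be rewritten with the CG-like structure of the following scheme, called $CD$-red: Step 0: set $k=0$, $y_0\in\mathbb{R}^n$, $r_0:=b-Ay_0$. If $r_0=0$ stop; else set $p_0:=r_0$, $k=k+1$. Compute $a_0:=r_0^Tp_0/p_0^TAp_0$, $\gamma_0:=-a_0$, $y_1:=y_0+a_0p_0$, $r_1:=r_0-a_0Ap_0$. If $r_1=0$ stop; else set $\sigma_0:=\gamma_0\|Ap_0\|^2/p_0^TAp_0$, $\beta_0:=-(1+\sigma_0)$, $p_1:=r_1+\beta_0p_0$, $k=k+1$. Step $k$: compute $a_{k-1}:=r_{k-1}^Tp_{k-1}/p_{k-1}^TAp_{k-1}$, $y_k:=y_{k-1}+a_{k-1}p_{k-1}$, $r_k:=r_{k-1}-a_{k-1}Ap_{k-1}$. If $r_k=0$ stop; else compute $\gamma_{k-1}$ by the recursion below, set $\sigma_{k-1}:=\gamma_{k-1}\|Ap_{k-1}\|^2/p_{k-1}^TAp_{k-1}$, $\beta_{k-1}:=-(1+\sigma_{k-1})$, $p_k:=r_k+\beta_{k-1}p_{k-1}$, $k=k+1$, and repeat Step $k$, provided that the sequence $\{\gamma_k\}$ satisfies $\gamma_0:=-a_0$ and \[ \gamma_k := -\frac{\gamma_{k-1}^2\|Ap_{k-1}\|^2+\gamma_{k-1}\,p_{k-1}^TAp_{k-1}}{p_k^TAp_k},\qquad k\ge 1 . \] In particular, the positions $\gamma_i=-a_i$, $i\ge 0$, in $CD$ satisfy this recursion.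
   Context: Consider the linear system $Ay=b$ with $A\in\mathbb{R}^{n\times n}$ symmetric positive definite and $b\in\mathbb{R}^n$. The $CD$ class is the following iteration, with parameters $\gamma_k\in\mathbb{R}\setminus\{0\}$ for all $k\ge0$. Step 0: set $k=0$, $y_0\in\mathbb{R}^n$, $r_0:=b-Ay_0$, $\gamma_0\neq0$. If $r_0=0$ stop; else set $p_0:=r_0$, $k=k+1$; compute $a_0:=r_0^Tp_0/p_0^TAp_0$, $y_1:=y_0+a_0p_0$, $r_1:=r_0-a_0Ap_0$. If $r_1=0$ stop; else set $\sigma_0:=\gamma_0\|Ap_0\|^2/p_0^TAp_0$, $p_1:=\gamma_0Ap_0-\sigma_0p_0$, $k=k+1$. Step $k$: compute $a_{k-1}:=r_{k-1}^Tp_{k-1}/p_{k-1}^TAp_{k-1}$, $y_k:=y_{k-1}+a_{k-1}p_{k-1}$, $r_k:=r_{k-1}-a_{k-1}Ap_{k-1}$. If $r_k=0$ stop; else set $\sigma_{k-1}:=\gamma_{k-1}\|Ap_{k-1}\|^2/p_{k-1}^TAp_{k-1}$, $\omega_{k-1}:=\frac{\gamma_{k-1}}{\gamma_{k-2}}\frac{p_{k-1}^TAp_{k-1}}{p_{k-2}^TAp_{k-2}}$, $p_k:=\gamma_{k-1}Ap_{k-1}-\sigma_{k-1}p_{k-1}-\omega_{k-1}p_{k-2}$, $k=k+1$, and repeat Step $k$. *)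

(* Defs.v *)
From HB Require Import structures.
From mathcomp Require Import all_boot all_order all_algebra.
Set Implicit Arguments. Unset Strict Implicit. Unset Printing Implicit Defensive.
Import Order.TTheory GRing.Theory Num.Theory.
Local Open Scope ring_scope.

Section CDSchemes.
Variable R : realFieldType.
Variable n : nat.

Definition vdot (u v : 'cV[R]_n) : R := (u^T *m v) 0 0.

Definition spd (A : 'M[R]_n) : Prop :=
  A^T = A /\ forall x : 'cV[R]_n, x != 0 -> 0 < vdot x (A *m x).

(* ---------------- the CD class ----------------
   State at index k: (y_k, r_k, p_k, p_{k-1}); the transition k -> k+1 is
   "Step k+1" of the scheme (it uses gamma_k, sigma_k, omega_k).
   After the scheme would stop (r_k = 0) the values are meaningless; all
   statements only refer to indices reached before stopping. *)
Record cd_state := CDState {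
  cd_y : 'cV[R]_n; cd_r : 'cV[R]_n; cd_p : 'cV[R]_n; cd_pp : 'cV[R]_n }.

Fixpoint cd_iter (A : 'M[R]_n) (b y0 : 'cV[R]_n) (gamma : nat -> R) (k : nat)
  : cd_state :=
  match k with
  | 0 => let r0 := b - A *m y0 in CDState y0 r0 r0 0
  | k'.+1 =>
    let s := cd_iter A b y0 gamma k' in
    let p := cd_p s in
    let Ap := A *m p in
    let a := vdot (cd_r s) p / vdot p Ap in
    let sigma := gamma k' * vdot Ap Ap / vdot p Ap in
    let pnew :=
      if k' is k''.+1 then
        let pp := cd_pp s in
        let omega := (gamma k' / gamma k'') * (vdot p Ap / vdot pp (A *m pp)) in
        gamma k' *: Ap - sigma *: p - omega *: pp
      else gamma 0%N *: Ap - sigma *: p in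
    CDState (cd_y s + a *: p) (cd_r s - a *: Ap) pnew p
  end.

Definition CD_y A b y0 gamma k := cd_y (cd_iter A b y0 gamma k).
Definition CD_r A b y0 gamma k := cd_r (cd_iter A b y0 gamma k).
Definition CD_p A b y0 gamma k := cd_p (cd_iter A b y0 gamma k).
Definition CD_a A b y0 gamma k :=
  vdot (CD_r A b y0 gamma k) (CD_p A b y0 gamma k)
  / vdot (CD_p A b y0 gamma k) (A *m CD_p A b y0 gamma k).

(* ---------------- the CD-red scheme ----------------
   State at index k: (y_k, r_k, p_k, gamma_{k-1}, p_{k-1}). *)
Record red_state := RedState {
  rd_y : 'cV[R]_n; rd_r : 'cV[R]_n; rd_p : 'cV[R]_n; rd_g : R; rd_pp : 'cV[R]_n }.

Fixpoint red_iter (A : 'M[R]_n) (b y0 : 'cV[R]_n) (k : nat) : red_state :=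
  match k with
  | 0 => let r0 := b - A *m y0 in RedState y0 r0 r0 0 0
  | k'.+1 =>
    let s := red_iter A b y0 k' in
    let p := rd_p s in
    let Ap := A *m p in
    let a := vdot (rd_r s) p / vdot p Ap in
    let ynew := rd_y s + a *: p in
    let rnew := rd_r s - a *: Ap in
    let g :=
      if k' is _.+1 then
        let gp := rd_g s in
        let pp := rd_pp s in
        - ((gp ^+ 2 * vdot (A *m pp) (A *m pp) + gp * vdot pp (A *m pp))
           / vdot p Ap)
      else - a in
    let sigma := g * vdot Ap Ap / vdot p Ap in
    let beta := - (1 + sigma) in
    RedState ynew rnew (rnew + beta *: p) g p
  end.

Definition RED_y A b y0 k := rd_y (red_iter A b y0 k).
Definition RED_r A b y0 k := rd_r (red_iter A b y0 k).
Definition RED_p A b y0 k := rd_p (red_iter A b y0 k).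

End CDSchemes.

(* Main.v *)
Require Import Defs.
From HB Require Import structures.
From mathcomp Require Import all_boot all_order all_algebra.
From mathcomp Require Import ring.
Import Order.TTheory GRing.Theory Num.Theory.
Local Open Scope ring_scope.
Set Implicit Arguments. Unset Strict Implicit.
Section V.
Variables (R : realFieldType) (n : nat).
Implicit Types u v w : 'cV[R]_n.

Lemma vdotE u v : vdot u v = \sum_i u i 0 * v i 0.
Proof. by rewrite /vdot mxE; apply: eq_bigr => j _; rewrite mxE. Qed.

Lemma vdotC u v : vdot u v = vdot v u.
Proof. by rewrite !vdotE; apply: eq_bigr => i _; rewrite mulrC. Qed.

Lemma vdotDr u v w : vdot u (v + w) = vdot u v + vdot u w.
Proof. by rewrite !vdotE -big_split; apply: eq_bigr => i _; rewrite mxE mulrDr. Qed.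

Lemma vdotBr u v w : vdot u (v - w) = vdot u v - vdot u w.
Proof. by rewrite !vdotE -sumrB; apply: eq_bigr => i _; rewrite !mxE mulrBr. Qed.

Lemma vdotZr u v c : vdot u (c *: v) = c * vdot u v.
Proof. by rewrite !vdotE mulr_sumr; apply: eq_bigr => i _; rewrite mxE mulrCA. Qed.

Lemma vdotDl u v w : vdot (v + w) u = vdot v u + vdot w u.
Proof. by rewrite vdotC vdotDr !(vdotC u). Qed.
Lemma vdotBl u v w : vdot (v - w) u = vdot v u - vdot w u.
Proof. by rewrite vdotC vdotBr !(vdotC u). Qed.
Lemma vdotZl u v c : vdot (c *: v) u = c * vdot v u.
Proof. by rewrite vdotC vdotZr !(vdotC u). Qed.

Lemma vdot_sym (A : 'M[R]_n) u v : A^T = A -> vdot (A *m u) v = vdot u (A *m v).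
Proof. by move=> sA; rewrite /vdot trmx_mul sA mulmxA. Qed.

Lemma vdot_eq0 u : vdot u u = 0 -> u = 0.
Proof.
rewrite vdotE => /eqP; rewrite psumr_eq0 => [/allP H|i _]; last by rewrite -expr2 sqr_ge0.
apply/matrixP => i j; rewrite (ord1 j) mxE.
by have /implyP := H i (mem_index_enum _); rewrite mulf_eq0 orbb => /(_ isT)/eqP.
Qed.
End V.
Lemma L1 (R : comNzRingType) (V : lmodType R) (x y z : V) (g s c : R) :
  x + c *: y + g *: z = (g *: z - s *: x - (- c) *: y) + (1 + s) *: x.
Proof.
rewrite scalerDl scale1r scaleNr opprK (addrC x (s *: x)) addrA.
rewrite (addrAC (g *: z) (- (s *: x))) subrK.
by rewrite [RHS]addrC (addrC (g *: z)) addrA.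
Qed.
Lemma L0 (R : comNzRingType) (V : lmodType R) (x z : V) (g s : R) :
  x + g *: z = (g *: z - s *: x) + (1 + s) *: x.
Proof. by rewrite scalerDl scale1r (addrC x (s *: x)) addrA subrK addrC. Qed.
Section CD.
Variables (R : realFieldType) (n : nat) (A : 'M[R]_n) (b y0 : 'cV[R]_n) (g : nat -> R).
Hypothesis symA : A^T = A.
Hypothesis posA : forall x : 'cV[R]_n, x != 0 -> 0 < vdot x (A *m x).
Hypothesis gnz : forall k, g k != 0.

Local Notation p k := (CD_p A b y0 g k).
Local Notation r k := (CD_r A b y0 g k).
Local Notation y k := (CD_y A b y0 g k).
Local Notation a k := (CD_a A b y0 g k).
Local Notation pAp k := (vdot (p k) (A *m p k)).
Local Notation AA k := (vdot (A *m p k) (A *m p k)).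
Local Notation sg k := (g k * AA k / pAp k).

Lemma rS k : r k.+1 = r k - a k *: (A *m p k). Proof. by []. Qed.
Lemma yS k : y k.+1 = y k + a k *: p k. Proof. by []. Qed.
Lemma p0E : p 0 = r 0. Proof. by []. Qed.
Lemma p1E : p 1 = g 0 *: (A *m p 0) - sg 0 *: p 0. Proof. by []. Qed.
Lemma pSSE k : p k.+2 = g k.+1 *: (A *m p k.+1) - sg k.+1 *: p k.+1
   - (g k.+1 / g k * (pAp k.+1 / pAp k)) *: p k.
Proof. by []. Qed.

Lemma O1 k : pAp k != 0 -> vdot (r k.+1) (p k) = 0.
Proof.
move=> h; rewrite rS vdotBl vdotZl vdot_sym // /CD_a divfK // subrr.
by [].
Qed.

Lemma Cc k : (forall j, (j <= k)%N -> pAp j != 0) -> vdot (p k.+1) (A *m p k) = 0.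
Proof.
elim: k => [|k IH] h.
  by rewrite p1E vdotBl !vdotZl divfK ?subrr // h.
rewrite pSSE !vdotBl !vdotZl divfK ?h // subrr sub0r.
rewrite -(vdot_sym (p k) (p k.+1) symA) (vdotC (A *m p k)) IH ?mulr0 ?oppr0 // => j hj; apply: h; exact: leqW.
Qed.

Lemma O2 k : pAp k != 0 -> pAp k.+1 != 0 -> vdot (p k.+1) (A *m p k) = 0 ->
  vdot (r k.+2) (p k) = 0.
Proof.
move=> h1 h2 h3; rewrite rS vdotBl vdotZl vdot_sym // h3 mulr0 subr0.
rewrite rS vdotBl vdotZl vdot_sym // /CD_a divfK // subrr.
by [].
Qed.
Lemma pnz k : p k != 0 -> pAp k != 0.
Proof. by move/posA; rewrite lt0r => /andP[]. Qed.

Lemma master k : (forall j, (j <= k)%N -> r j != 0) ->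
  (forall i, (i <= k)%N -> a i = - g i) ->
  [/\ (forall j, (j <= k)%N -> pAp j != 0),
     r k.+1 = p k.+1 + (1 + sg k) *: p k &
     vdot (r k.+1) (p k.+1) = g k ^+ 2 * AA k + g k * pAp k].
Proof.
elim: k => [|k IH] hr ha.
  have p0nz : pAp 0 != 0 by apply: pnz; rewrite p0E; exact: hr.
  have P0 : forall j, (j <= 0)%N -> pAp j != 0 by move=> j; rewrite leqn0 => /eqP ->.
  have S0 : r 1 = p 1 + (1 + sg 0) *: p 0.
    by rewrite rS (ha 0 isT) scaleNr opprK p1E -p0E; exact: L0.
  split => //.
  rewrite [X in vdot _ X]p1E vdotBr !vdotZr (O1 p0nz) mulr0 subr0 S0 vdotDl vdotZl.
  rewrite (Cc P0) add0r.
  field. exact: p0nz.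
have [Pk Sk Ik] := IH (fun j hj => hr j (leqW hj)) (fun i hi => ha i (leqW hi)).
have pS : pAp k.+1 != 0.
  apply: pnz; apply/eqP => h0.
  have := hr k.+1 (leqnn _); apply/negP; rewrite negbK; apply/eqP/vdot_eq0.
  by rewrite [X in vdot _ X]Sk h0 add0r vdotZr (O1 (Pk k (leqnn _))) mulr0.
have Pall : forall j, (j <= k.+1)%N -> pAp j != 0.
  by move=> j; rewrite leq_eqVlt => /orP[/eqP->|]; [ |rewrite ltnS; exact: Pk].
have Rel : g k.+1 * pAp k.+1 = - (g k ^+ 2 * AA k + g k * pAp k).
  have -> : g k.+1 = - a k.+1 by rewrite (ha _ (leqnn _)) opprK.
  by rewrite /CD_a mulNr divfK // Ik.
have om : g k.+1 / g k * (pAp k.+1 / pAp k) = - (1 + sg k).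
  rewrite mulf_div Rel.
  have := gnz k; have := Pk k (leqnn _) => h1 h2.
  by field; rewrite h1 h2.
have Sk1 : r k.+2 = p k.+2 + (1 + sg k.+1) *: p k.+1.
  by rewrite rS (ha _ (leqnn _)) scaleNr opprK Sk pSSE om; exact: L1.
split => //.
rewrite [X in vdot _ X]pSSE !vdotBr !vdotZr (O1 pS).
rewrite (O2 (Pk k (leqnn _)) pS (Cc Pk)) !mulr0 !subr0 Sk1 vdotDl vdotZl (Cc Pall) add0r.
by field.
Qed.
End CD.

Unset Implicit Arguments. Set Strict Implicit.
Theorem lemma4 (R : realFieldType) (n : nat) (A : 'M[R]_n) (b y0 : 'cV[R]_n) :
  spd A ->
  (forall gamma : nat -> R,
     (forall k, gamma k != 0) ->
     (CD_r A b y0 gamma 0 != 0 -> gamma 0%N = - CD_a A b y0 gamma 0) ->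
     (forall k, (0 < k)%N ->
        (forall j, (j <= k)%N -> CD_r A b y0 gamma j != 0) ->
        gamma k =
          - ((gamma k.-1 ^+ 2
                * vdot (A *m CD_p A b y0 gamma k.-1) (A *m CD_p A b y0 gamma k.-1)
              + gamma k.-1
                * vdot (CD_p A b y0 gamma k.-1) (A *m CD_p A b y0 gamma k.-1))
             / vdot (CD_p A b y0 gamma k) (A *m CD_p A b y0 gamma k))) ->
     forall k, (forall j, (j < k)%N -> CD_r A b y0 gamma j != 0) ->
       CD_y A b y0 gamma k = RED_y A b y0 k /\
       CD_r A b y0 gamma k = RED_r A b y0 k /\
       (CD_r A b y0 gamma k != 0 -> CD_p A b y0 gamma k = RED_p A b y0 k))
  /\
  (forall gamma : nat -> R,
     (forall k, gamma k != 0) ->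
     (forall i, (forall j, (j <= i)%N -> CD_r A b y0 gamma j != 0) ->
        gamma i = - CD_a A b y0 gamma i) ->
     forall k, (0 < k)%N ->
       (forall j, (j <= k)%N -> CD_r A b y0 gamma j != 0) ->
       gamma k =
         - ((gamma k.-1 ^+ 2
               * vdot (A *m CD_p A b y0 gamma k.-1) (A *m CD_p A b y0 gamma k.-1)
             + gamma k.-1
               * vdot (CD_p A b y0 gamma k.-1) (A *m CD_p A b y0 gamma k.-1))
            / vdot (CD_p A b y0 gamma k) (A *m CD_p A b y0 gamma k))).
Proof.
move=> [sA pA]; split.
  move=> g gnz H0 Hrec.
  have Gind : forall i, (forall j, (j <= i)%N -> CD_r A b y0 g j != 0) ->
      forall i', (i' <= i)%N -> CD_a A b y0 g i' = - g i'.
    elim => [|i IH] hr i'.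
      by rewrite leqn0 => /eqP ->; rewrite H0 ?opprK //; exact: hr.
    have hr' : forall j, (j <= i)%N -> CD_r A b y0 g j != 0.
      by move=> j hj; apply: hr; exact: leqW.
    rewrite leq_eqVlt => /orP[/eqP->|]; last by rewrite ltnS; exact: IH.
    have [_ _ I] := @master _ _ A b y0 g sA pA gnz i hr' (IH hr').
    by rewrite (Hrec i.+1 isT hr) /= -I /CD_a opprK.
  have Inv : forall k, (forall j, (j < k)%N -> CD_r A b y0 g j != 0) ->
     red_iter A b y0 k = RedState (CD_y A b y0 g k) (CD_r A b y0 g k) (CD_p A b y0 g k)
        (if k is j.+1 then g j else 0) (if k is j.+1 then CD_p A b y0 g j else 0).
    elim => [|k IH] hr; first by [].
    have NZ : forall j, (j <= k)%N -> CD_r A b y0 g j != 0 by [].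
    have G := Gind k NZ.
    have [Pk Sk _] := @master _ _ A b y0 g sA pA gnz k NZ G.
    rewrite /= IH /=; last by move=> j hj; apply: hr; exact: ltnW.
    have Hg : (if k is _.+1 then
        - ((g k.-1 ^+ 2 * vdot (A *m CD_p A b y0 g k.-1) (A *m CD_p A b y0 g k.-1)
           + g k.-1 * vdot (CD_p A b y0 g k.-1) (A *m CD_p A b y0 g k.-1))
           / vdot (CD_p A b y0 g k) (A *m CD_p A b y0 g k))
        else - (vdot (CD_r A b y0 g k) (CD_p A b y0 g k)
               / vdot (CD_p A b y0 g k) (A *m CD_p A b y0 g k))) = g k.
      destruct k as [|k].
        by have := G 0 isT; rewrite /CD_a => ->; rewrite opprK.
      by rewrite -Hrec.
    have Hp : CD_r A b y0 g k.+1 + - (1 + g k * vdot (A *m CD_p A b y0 g k) (A *m CD_p A b y0 g k)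
        / vdot (CD_p A b y0 g k) (A *m CD_p A b y0 g k)) *: CD_p A b y0 g k = CD_p A b y0 g k.+1.
      by rewrite Sk scaleNr addrK.
    by destruct k as [|k]; rewrite /= in Hg; rewrite Hg; congr RedState => //; exact: Hp.
  move=> k hr; rewrite /RED_y /RED_r /RED_p Inv //.
move=> g gnz HG k k0 hr.
have G : forall i, (i <= k)%N -> CD_a A b y0 g i = - g i.
  by move=> i hi; rewrite HG ?opprK // => j hj; apply: hr; exact: leq_trans hj hi.
case: k k0 hr G => [//|k] _ hr G.
have [_ _ I] := @master _ _ A b y0 g sA pA gnz k (fun j hj => hr j (leqW hj))
   (fun i hi => G i (leqW hi)).
by rewrite [LHS]HG // /CD_a /= I.
Qed.
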